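(* Let $\Phi$ be a finite crystallographic root system with Weyl group $W$ and let $\beta,\gamma\in\Phi^+$. Then $|W^{(++)}(\beta,\gamma)|=|W^{(--)}(\beta,\gamma)|$ and $|W^{(+-)}(\beta,\gamma)|=|W^{(-+)}(\beta,\gamma)|$. If moreover $\beta\ne\gamma$, then $|W^{(++)}(\beta,\gamma)|=(\operatorname{ord}(\beta,\gamma)-1)\cdot|W^{(+-)}(\beta,\gamma)|$ if $\langle\beta,\gamma\rangle\ge0$, and $|W^{(+-)}(\beta,\gamma)|=(\operatorname{ord}(\beta,\gamma)-1)\cdot|W^{(++)}(\beta,\gamma)|$ if $\langle\beta,\gamma\rangle\le0$. In particular, all four sets $W^{(++)},W^{(--)},W^{(+-)},W^{(-+)}$ have equal cardinality if and only if $\beta$ and $\gamma$ are orthogonal.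
   Context: $\Phi\subset V$ is a finite crystallographic root system in a Euclidean space with inner product $\langle\cdot,\cdot\rangle$, positive roots $\Phi^+$, negative roots $\Phi^-=-\Phi^+$. For signs $\varepsilon,\delta\in\{+,-\}$, $W^{(\varepsilon\delta)}(\beta,\gamma)=\{w\in W : \varepsilon\cdot w(\beta)\in\Phi^+,\ \delta\cdot w(\gamma)\in\Phi^+\}$. $\operatorname{ord}(\beta,\gamma)=\min\{k>0:(s_\beta s_\gamma)^k=e\}$ where $s_\beta$ is the reflection in $\beta$. *)

(* Defs.v *)
From HB Require Import structures.
From mathcomp Require Import all_boot all_order all_algebra.
From mathcomp Require Import reals.
Set Implicit Arguments. Unset Strict Implicit. Unset Printing Implicit Defensive.
Import Order.TTheory GRing.Theory Num.Theory.
Local Open Scope ring_scope.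

(* The Euclidean space V is modelled as R^n = 'rV[R]_n with the standard
   inner product; every finite-dimensional Euclidean space is isometric to it.
   Linear maps act on row vectors on the right: w(v) = v *m w. *)

Definition dot (R : realType) (n : nat) (u v : 'rV[R]_n) : R := (u *m v^T) 0 0.

Definition refl_mx (R : realType) (n : nat) (a : 'rV[R]_n) : 'M[R]_n :=
  1%:M - (2 / dot a a) *: (a^T *m a).

Definition root_system (R : realType) (n : nat) (Phi : seq 'rV[R]_n) : Prop :=
  [/\ (0 : 'rV[R]_n) \notin Phi,
      row_full (\matrix_(i < size Phi) Phi`_i),
      (forall a b, a \in Phi -> b \in Phi -> b *m refl_mx a \in Phi),
      (forall a b, a \in Phi -> b \in Phi ->
          exists z : int, 2 * dot b a / dot a a = z%:~R)
    & (forall a (c : R), a \in Phi -> c *: a \in Phi -> c = 1 \/ c = -1)].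

(* A positive system: t is a regular vector (orthogonal to no root) and the
   positive roots are those with <t, a> > 0. *)
Definition regular (R : realType) (n : nat) (Phi : seq 'rV[R]_n) (t : 'rV[R]_n) :=
  forall a, a \in Phi -> dot t a != 0.

Definition posroot (R : realType) (n : nat) (Phi : seq 'rV[R]_n) (t v : 'rV[R]_n) : bool :=
  (v \in Phi) && (0 < dot t v).

(* The Weyl group: the group generated by the reflections s_a, a in Phi
   (a finite group, so the submonoid generated is the whole group). *)
Inductive in_W (R : realType) (n : nat) (Phi : seq 'rV[R]_n) : 'M[R]_n -> Prop :=
  | inW1 : in_W Phi 1%:M
  | inWS a w : a \in Phi -> in_W Phi w -> in_W Phi (w *m refl_mx a).

Definition sgn (R : realType) (n : nat) (eps : bool) (v : 'rV[R]_n) : 'rV[R]_n :=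
  if eps then v else - v.

(* W^(eps delta)(beta, gamma); eps = true means '+', false means '-'. *)
Definition Wsign (R : realType) (n : nat) (Phi : seq 'rV[R]_n) (t : 'rV[R]_n)
  (eps delta : bool) (beta gamma : 'rV[R]_n) (w : 'M[R]_n) : Prop :=
  [/\ in_W Phi w, posroot Phi t (sgn eps (beta *m w))
    & posroot Phi t (sgn delta (gamma *m w))].

Definition has_card (T : eqType) (P : T -> Prop) (k : nat) : Prop :=
  exists s : seq T, [/\ uniq s, (forall x, x \in s <-> P x) & size s = k].

Definition is_order (R : realType) (n : nat) (M : 'M[R]_n) (k : nat) : Prop :=
  [/\ (0 < k)%N, iter k (mulmx M) 1%:M = 1%:M
    & forall j, (0 < j < k)%N -> iter j (mulmx M) 1%:M <> 1%:M].

(* Main.v *)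
Require Import Defs.
From HB Require Import structures.
From mathcomp Require Import all_boot all_order all_algebra.
From mathcomp Require Import reals.
From mathcomp Require Import ring lra zify.
From Stdlib Require Import ClassicalEpsilon.
Import Order.TTheory GRing.Theory Num.Theory.
Set Implicit Arguments. Unset Strict Implicit. Unset Printing Implicit Defensive.
Local Open Scope ring_scope.

Definition asb (P : Prop) : bool := if excluded_middle_informative P then true else false.
Lemma asbP (P : Prop) : reflect P (asb P).
Proof. by rewrite /asb; case: excluded_middle_informative => h; constructor. Qed.

Lemma fin_enum_aux (T : eqType) (F : finType) (P : T -> Prop) (c : T -> F) :
  (forall x y, P x -> P y -> c x = c y -> x = y) ->
  forall l : seq F, uniq l -> exists s : seq T, uniq s /\ forall x, x \in s <-> (P x /\ c x \in l).
Proof.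
move=> inj; elim=> [|f l IH] /=.
  by move=> _; exists [::]; split => // x; split => //; case.
case/andP=> fl ul; have [s [us Hs]] := IH ul.
case: (classic (exists x, P x /\ c x = f)) => [[x0 [Px0 cx0]]|nE].
  exists (x0 :: s); split.
    rewrite /= us andbT; apply/negP => /Hs [_]; by rewrite cx0 (negbTE fl).
  move=> x; rewrite in_cons; split.
    case/orP => [/eqP -> | /Hs [Px cx]]; first by rewrite cx0 mem_head.
    by rewrite in_cons cx orbT.
  case=> Px; rewrite in_cons => /orP [/eqP cx | cx].
    by rewrite (inj x x0) ?eqxx // cx cx0.
  by apply/orP; right; apply/Hs.
exists s; split => // x; split.
  by move/Hs => [Px cx]; rewrite in_cons cx orbT.
case=> Px; rewrite in_cons => /orP [/eqP cx | cx]; last by apply/Hs.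
by case: nE; exists x.
Qed.

Lemma fin_enum (T : eqType) (F : finType) (P : T -> Prop) (c : T -> F) :
  (forall x y, P x -> P y -> c x = c y -> x = y) ->
  exists s : seq T, uniq s /\ forall x, x \in s <-> P x.
Proof.
move=> inj; have [s [us Hs]] := fin_enum_aux inj (enum_uniq F).
by exists s; split => // x; rewrite Hs mem_enum; split => [[]|].
Qed.

Lemma count_sum (T : Type) (p : pred T) (s : seq T) : count p s = (\sum_(x <- s) p x)%N.
Proof. by elim: s => [|x s IH] /=; rewrite ?big_nil ?big_cons ?IH. Qed.

Lemma double_count (T D : eqType) (SW : seq T) (ds : seq D) (f : D -> T -> T) (q : pred T) (c : nat) :
  uniq SW ->
  (forall d, d \in ds -> uniq (map (f d) SW) /\ map (f d) SW =i SW) ->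
  (forall w, w \in SW -> count (fun d => q (f d w)) ds = c) ->
  (size ds * count q SW = size SW * c)%N.
Proof.
move=> uSW Hd Hc.
have E1 : (\sum_(w <- SW) count (fun d => q (f d w)) ds = size SW * c)%N.
  rewrite (eq_big_seq (fun _ => c)); last by move=> w /Hc.
  by rewrite big_const_seq count_predT iter_addn_0 mulnC.
rewrite -E1 (eq_bigr (fun w => \sum_(d <- ds) q (f d w))%N); last by move=> w _; rewrite count_sum.
rewrite exchange_big /=.
rewrite (eq_big_seq (fun _ => count q SW)); first by rewrite big_const_seq count_predT iter_addn_0 mulnC.
move=> d /Hd [u m]; rewrite -count_sum.
have pe : perm_eq (map (f d) SW) SW by apply: uniq_perm.
by rewrite -(count_map (f d) q) (permP pe).
Qed.
Lemma dot_sym (R : realType) (n : nat) (u v : 'rV[R]_n) : dot u v = dot v u.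
Proof. have E : (u *m v^T)^T = v *m u^T by rewrite trmx_mul trmxK.
by rewrite /dot -E [in RHS]mxE. Qed.

Lemma dotDl (R : realType) (n : nat) (u v w : 'rV[R]_n) : dot (u + v) w = dot u w + dot v w.
Proof. by rewrite /dot mulmxDl mxE. Qed.

Lemma dotZl (R : realType) (n : nat) (c : R) (u w : 'rV[R]_n) : dot (c *: u) w = c * dot u w.
Proof. by rewrite /dot -scalemxAl mxE. Qed.

Lemma dotNl (R : realType) (n : nat) (u w : 'rV[R]_n) : dot (- u) w = - dot u w.
Proof. by rewrite /dot mulNmx mxE. Qed.

Lemma dotDr (R : realType) (n : nat) (u v w : 'rV[R]_n) : dot w (u + v) = dot w u + dot w v.
Proof. by rewrite dot_sym dotDl !(dot_sym w). Qed.

Lemma dotZr (R : realType) (n : nat) (c : R) (u w : 'rV[R]_n) : dot w (c *: u) = c * dot w u.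
Proof. by rewrite dot_sym dotZl dot_sym. Qed.

Lemma dotNr (R : realType) (n : nat) (u w : 'rV[R]_n) : dot w (- u) = - dot w u.
Proof. by rewrite dot_sym dotNl dot_sym. Qed.

Lemma dot_ge0 (R : realType) (n : nat) (u : 'rV[R]_n) : 0 <= dot u u.
Proof.
rewrite /dot mxE; apply: sumr_ge0 => i _; rewrite mxE -expr2; exact: sqr_ge0.
Qed.

Lemma dot_eq0 (R : realType) (n : nat) (u : 'rV[R]_n) : dot u u = 0 -> u = 0.
Proof.
rewrite /dot mxE => /eqP; rewrite psumr_eq0; last first.
  by move=> i _; rewrite mxE -expr2; exact: sqr_ge0.
move=> /allP H; apply/rowP => j; rewrite mxE.
have := H j (mem_index_enum j); rewrite mxE /= mulf_eq0 orbb => /eqP.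
by [].
Qed.

Definition cf (R : realType) (n : nat) (a v : 'rV[R]_n) : R := 2 * dot v a / dot a a.

Lemma refl_apply (R : realType) (n : nat) (a v : 'rV[R]_n) :
  v *m refl_mx a = v - cf a v *: a.
Proof.
rewrite /refl_mx mulmxBr mulmx1 -scalemxAr mulmxA [v *m a^T]mx11_scalar mul_scalar_mx.
by rewrite scalerA /cf /dot mulrAC.
Qed.

Lemma mx_ext (R : realType) (n : nat) (A B : 'M[R]_n) :
  (forall v : 'rV[R]_n, v *m A = v *m B) -> A = B.
Proof. by move=> H; apply/row_matrixP => i; rewrite !rowE H. Qed.

Lemma cfD (R : realType) (n : nat) (a u v : 'rV[R]_n) : cf a (u + v) = cf a u + cf a v.
Proof. rewrite /cf dotDl; ring. Qed.
Lemma cfZ (R : realType) (n : nat) (a u : 'rV[R]_n) c : cf a (c *: u) = c * cf a u.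
Proof. rewrite /cf dotZl; ring. Qed.
Lemma cfN (R : realType) (n : nat) (a u : 'rV[R]_n) : cf a (- u) = - cf a u.
Proof. rewrite /cf dotNl; ring. Qed.
Lemma cfaa (R : realType) (n : nat) (a : 'rV[R]_n) : a != 0 -> cf a a = 2.
Proof.
move=> a0; have : dot a a != 0 by apply/eqP => /dot_eq0 /eqP; rewrite (negbTE a0).
by move=> H; rewrite /cf mulfK.
Qed.

Lemma refl_invol (R : realType) (n : nat) (a : 'rV[R]_n) : a != 0 -> refl_mx a *m refl_mx a = 1%:M.
Proof.
move=> a0; apply: mx_ext => v; rewrite mulmxA !refl_apply mulmx1 cfD cfN cfZ cfaa //.
rewrite -addrA -!scaleNr -scalerDl.
suff -> : (- cf a v + - (cf a v + - (cf a v * 2))) = 0 by rewrite scale0r addr0.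
ring.
Qed.

Lemma rs_nz (R : realType) (n : nat) (Phi : seq 'rV[R]_n) a :
  root_system Phi -> a \in Phi -> a != 0.
Proof. by case=> H0 _ _ _ _ aP; apply/eqP => a0; move: H0; rewrite -a0 aP. Qed.

Lemma refl_self (R : realType) (n : nat) (a : 'rV[R]_n) : a != 0 -> a *m refl_mx a = - a.
Proof. by move=> a0; rewrite refl_apply cfaa // scaler_nat mulr2n opprD addrA subrr add0r. Qed.

Lemma rs_neg (R : realType) (n : nat) (Phi : seq 'rV[R]_n) a :
  root_system Phi -> a \in Phi -> - a \in Phi.
Proof.
move=> rs aP; have a0 := rs_nz rs aP; rewrite -refl_self //.
by case: rs => _ _ H _ _; apply: H.
Qed.

Lemma in_W_mul (R : realType) (n : nat) (Phi : seq 'rV[R]_n) d w :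
  in_W Phi d -> in_W Phi w -> in_W Phi (d *m w).
Proof.
move=> Hd; elim=> [|a w' aP _ IH]; first by rewrite mulmx1.
by rewrite mulmxA; apply: inWS.
Qed.

Lemma in_W_refl (R : realType) (n : nat) (Phi : seq 'rV[R]_n) a :
  a \in Phi -> in_W Phi (refl_mx a).
Proof. by move=> aP; rewrite -(mul1mx (refl_mx a)); apply: inWS => //; apply: inW1. Qed.

Lemma in_W_root (R : realType) (n : nat) (Phi : seq 'rV[R]_n) w u :
  root_system Phi -> in_W Phi w -> u \in Phi -> u *m w \in Phi.
Proof.
move=> rs; elim=> [|a w' aP _ IH] uP; first by rewrite mulmx1.
by rewrite mulmxA; case: rs => _ _ H _ _; apply: H => //; apply: IH.
Qed.

Definition rf (R : realType) (n : nat) (b g : 'rV[R]_n) (h : bool) := refl_mx (if h then b else g).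
Fixpoint mxw (R : realType) (n : nat) (b g : 'rV[R]_n) (s : seq bool) : 'M[R]_n :=
  if s is h :: s' then rf b g h *m mxw b g s' else 1%:M.

Lemma mxw_cat (R : realType) (n : nat) (b g : 'rV[R]_n) s1 s2 :
  mxw b g (s1 ++ s2) = mxw b g s1 *m mxw b g s2.
Proof. by elim: s1 => [|h s IH] /=; rewrite ?mul1mx // IH mulmxA. Qed.

Lemma mxw_W (R : realType) (n : nat) (Phi : seq 'rV[R]_n) b g s :
  b \in Phi -> g \in Phi -> in_W Phi (mxw b g s).
Proof.
move=> bP gP; elim: s => [|h s IH] /=; first exact: inW1.
by apply: in_W_mul => //; apply: in_W_refl; case: h.
Qed.

Lemma mxw_invl (R : realType) (n : nat) (b g : 'rV[R]_n) s :
  b != 0 -> g != 0 -> mxw b g (rev s) *m mxw b g s = 1%:M.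
Proof.
move=> b0 g0; elim: s => [|h s IH] /=; first by rewrite mulmx1.
rewrite rev_cons -cats1 mxw_cat /= mulmx1 -mulmxA (mulmxA (rf b g h)).
by rewrite /rf refl_invol ?mul1mx //; case: h.
Qed.

Lemma mxw_invr (R : realType) (n : nat) (b g : 'rV[R]_n) s :
  b != 0 -> g != 0 -> mxw b g s *m mxw b g (rev s) = 1%:M.
Proof. by move=> b0 g0; rewrite -{1}(revK s) mxw_invl. Qed.

Lemma W_enum (R : realType) (n : nat) (Phi : seq 'rV[R]_n) :
  root_system Phi -> exists SW : seq 'M[R]_n, uniq SW /\ forall x, x \in SW <-> in_W Phi x.
Proof.
move=> rs; pose N := size Phi.
pose c (M : 'M[R]_n) : {ffun 'I_N -> 'I_N.+1} := [ffun i : 'I_N => (inord (index (Phi`_i *m M) Phi) : 'I_N.+1)].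
apply: (@fin_enum _ _ _ c) => M1 M2 W1 W2 ceq.
have rowsE : forall i : 'I_N, Phi`_i *m M1 = Phi`_i *m M2.
  move=> i; have := congr1 (fun f : {ffun 'I_N -> 'I_N.+1} => val (f i)) ceq; rewrite /c !ffunE /=.
  rewrite !inordK ?ltnS ?index_size // => ei.
  have P1 : Phi`_i *m M1 \in Phi by apply: in_W_root => //; apply: mem_nth.
  have P2 : Phi`_i *m M2 \in Phi by apply: in_W_root => //; apply: mem_nth.
  by rewrite -(nth_index 0 P1) -(nth_index 0 P2) ei.
case: (rs) => _ Hfull _ _ _; case/row_fullP: Hfull => B HB.
have AE : (\matrix_(i < size Phi) Phi`_i) *m M1 = (\matrix_(i < size Phi) Phi`_i) *m M2.
  by apply/row_matrixP => i; rewrite !row_mul rowK rowsE.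
by rewrite -(mul1mx M1) -(mul1mx M2) -HB -!mulmxA AE.
Qed.

Fixpoint st (R : realType) (a b P Q : R) (s : seq bool) (xy : R * R) : R * R :=
  if s is h :: s' then
    st a b P Q s' (if h then (- P - xy.1 - b * xy.2, xy.2) else (xy.1, - Q - xy.2 - a * xy.1))
  else xy.

Lemma st_correct (R : realType) (n : nat) (b g v : 'rV[R]_n) s (x y : R) :
  b != 0 -> g != 0 ->
  (v + x *: b + y *: g) *m mxw b g s =
  v + (st (cf g b) (cf b g) (cf b v) (cf g v) s (x, y)).1 *: b
    + (st (cf g b) (cf b g) (cf b v) (cf g v) s (x, y)).2 *: g.
Proof.
move=> b0 g0; elim: s x y => [|h s IH] x y /=; first by rewrite mulmx1.
rewrite mulmxA /rf; case: h; rewrite refl_apply !cfD !cfZ cfaa // -IH; congr (_ *m _);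
  apply/rowP => j; rewrite !mxE /=; ring.
Qed.

Definition pw (j : nat) : seq bool := flatten (nseq j [:: true; false]).

Lemma iterM (R : realType) (n : nat) (b g : 'rV[R]_n) j :
  iter j (mulmx (refl_mx b *m refl_mx g)) 1%:M = mxw b g (pw j).
Proof. by elim: j => [|j IH] //=; rewrite IH /rf !mulmxA. Qed.

Lemma dot_nz (R : realType) (n : nat) (b : 'rV[R]_n) : b != 0 -> dot b b != 0.
Proof. by move=> b0; apply/eqP => /dot_eq0 /eqP; rewrite (negbTE b0). Qed.

Lemma lin_dep (R : realType) (n : nat) (b g : 'rV[R]_n) (X Y : R) :
  b != 0 -> g != 0 -> X *: b + Y *: g = 0 ->
  X + Y * cf b g / 2 = 0 /\ X * cf g b / 2 + Y = 0.
Proof.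
move=> b0 g0 E; have Bn := dot_nz b0; have Gn := dot_nz g0.
have E1 := congr1 (fun u => dot u b) E; have E2 := congr1 (fun u => dot u g) E.
have d0 : forall u : 'rV[R]_n, dot 0 u = 0 by move=> u; rewrite /dot mul0mx mxE.
move: E1 E2; rewrite /= !dotDl !dotZl !d0 => E1 E2.
rewrite /cf; split.
  have -> : X + Y * (2 * dot g b / dot b b) / 2
     = (X * dot b b + Y * dot g b) / dot b b by field.
  by rewrite E1 mul0r.
have -> : X * (2 * dot b g / dot g g) / 2 + Y
     = (X * dot b g + Y * dot g g) / dot g g by field.
by rewrite E2 mul0r.
Qed.

Lemma is_order_gen (R : realType) (n : nat) (b g : 'rV[R]_n) k :
  b != 0 -> g != 0 -> (0 < k)%N ->
  (forall P Q, st (cf g b) (cf b g) P Q (pw k) (0, 0) = (0, 0)) ->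
  (forall j, (0 < j < k)%N ->
     ~ ((st (cf g b) (cf b g) 2 (cf g b) (pw j) (0, 0)).1
          + (st (cf g b) (cf b g) 2 (cf g b) (pw j) (0, 0)).2 * cf b g / 2 = 0 /\
        (st (cf g b) (cf b g) 2 (cf g b) (pw j) (0, 0)).1 * cf g b / 2
          + (st (cf g b) (cf b g) 2 (cf g b) (pw j) (0, 0)).2 = 0)) ->
  is_order (refl_mx b *m refl_mx g) k.
Proof.
move=> b0 g0 k0 Hk Hj; split => //.
  rewrite iterM; apply: mx_ext => v; rewrite mulmx1.
  have := st_correct v (pw k) 0 0 b0 g0; rewrite !scale0r !addr0 => ->.
  by rewrite Hk /= !scale0r !addr0.
move=> j /Hj H; rewrite iterM => E; apply: H.
have := st_correct b (pw j) 0 0 b0 g0; rewrite !scale0r !addr0 E mulmx1 cfaa //.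
move=> Eb; apply: (lin_dep b0 g0).
by apply: (addrI b); rewrite addr0 addrA -Eb.
Qed.

Definition sg (R : realType) (e : bool) (r : R) := if e then r else - r.
Definition fx (R : realType) (a b x y : R) d :=
  x + (st a b 2 a d (0, 0)).1 * x + (st a b 2 a d (0, 0)).2 * y.
Definition fy (R : realType) (a b x y : R) d :=
  y + (st a b b 2 d (0, 0)).1 * x + (st a b b 2 d (0, 0)).2 * y.

Lemma word_image (R : realType) (n : nat) (b g v : 'rV[R]_n) (t : 'rV[R]_n) w d :
  b != 0 -> g != 0 ->
  dot t (v *m (mxw b g d *m w)) =
  dot t (v *m w) + (st (cf g b) (cf b g) (cf b v) (cf g v) d (0, 0)).1 * dot t (b *m w)
   + (st (cf g b) (cf b g) (cf b v) (cf g v) d (0, 0)).2 * dot t (g *m w).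
Proof.
move=> b0 g0; rewrite mulmxA.
have := st_correct v d 0 0 b0 g0; rewrite !scale0r !addr0 => ->.
by rewrite !mulmxDl -!scalemxAl !dotDr !dotZr.
Qed.

Lemma posroot_sgn (R : realType) (n : nat) (Phi : seq 'rV[R]_n) t e u :
  root_system Phi -> u \in Phi -> posroot Phi t (sgn e u) = (0 < sg e (dot t u)).
Proof.
move=> rs uP; rewrite /posroot /sgn /sg; case: e; first by rewrite uP.
by rewrite rs_neg // dotNr.
Qed.

Lemma Wsign_word (R : realType) (n : nat) (Phi : seq 'rV[R]_n) t b g w d e f :
  root_system Phi -> b \in Phi -> g \in Phi -> in_W Phi w ->
  Wsign Phi t e f b g (mxw b g d *m w) <->
  (0 < sg e (fx (cf g b) (cf b g) (dot t (b *m w)) (dot t (g *m w)) d)) &&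
  (0 < sg f (fy (cf g b) (cf b g) (dot t (b *m w)) (dot t (g *m w)) d)).
Proof.
move=> rs bP gP wW; have b0 := rs_nz rs bP; have g0 := rs_nz rs gP.
have dW : in_W Phi (mxw b g d *m w) by apply: in_W_mul => //; apply: mxw_W.
rewrite /Wsign !posroot_sgn //; try by apply: in_W_root.
rewrite !word_image // (cfaa b0) (cfaa g0) /fx /fy; split; first by case=> _ -> ->.
by move=> /andP [h1 h2]; split.
Qed.

Lemma word_nz (R : realType) (n : nat) (Phi : seq 'rV[R]_n) t b g w d :
  root_system Phi -> regular Phi t -> b \in Phi -> g \in Phi -> in_W Phi w ->
  fx (cf g b) (cf b g) (dot t (b *m w)) (dot t (g *m w)) d != 0 /\
  fy (cf g b) (cf b g) (dot t (b *m w)) (dot t (g *m w)) d != 0.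
Proof.
move=> rs reg bP gP wW; have b0 := rs_nz rs bP; have g0 := rs_nz rs gP.
have dW : in_W Phi (mxw b g d *m w) by apply: in_W_mul => //; apply: mxw_W.
split.
  have := reg _ (in_W_root rs dW bP); by rewrite word_image // ?(cfaa b0) ?(cfaa g0).
have := reg _ (in_W_root rs dW gP); by rewrite word_image // ?(cfaa b0) ?(cfaa g0).
Qed.

Fixpoint sti (a b P Q : int) (s : seq bool) (xy : int * int) : int * int :=
  if s is h :: s' then
    sti a b P Q s' (if h then (- P - xy.1 - b * xy.2, xy.2) else (xy.1, - Q - xy.2 - a * xy.1))
  else xy.

Lemma st_int (R : realType) (a b P Q : int) s (x y : int) :
  st (a%:~R : R) b%:~R P%:~R Q%:~R s (x%:~R, y%:~R) =
  ((sti a b P Q s (x, y)).1%:~R, (sti a b P Q s (x, y)).2%:~R).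
Proof.
elim: s x y => [|h s IH] x y //=; case: h; rewrite -IH ?intrD ?intrB ?intrN ?rmorphM //=.
Qed.

Definition fxi (a b : int) d : int * int :=
  (1 + (sti a b 2 a d (0, 0)).1, (sti a b 2 a d (0, 0)).2).
Definition fyi (a b : int) d : int * int :=
  ((sti a b b 2 d (0, 0)).1, 1 + (sti a b b 2 d (0, 0)).2).

Lemma fx_int (R : realType) (a b : int) (x y : R) d :
  fx a%:~R b%:~R x y d = (fxi a b d).1%:~R * x + (fxi a b d).2%:~R * y.
Proof.
rewrite /fx /fxi /= (_ : (2 : R) = (2 : int)%:~R) // (_ : (0 : R) = (0 : int)%:~R) //.
by rewrite st_int /= intrD; ring.
Qed.

Lemma fy_int (R : realType) (a b : int) (x y : R) d :
  fy a%:~R b%:~R x y d = (fyi a b d).1%:~R * x + (fyi a b d).2%:~R * y.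
Proof.
rewrite /fy /fyi /= (_ : (2 : R) = (2 : int)%:~R) // (_ : (0 : R) = (0 : int)%:~R) //.
by rewrite st_int /= intrD; ring.
Qed.

Lemma intr_pos (R : realType) (m : nat) : (Posz m)%:~R = m%:R :> R.
Proof. by []. Qed.
Lemma intr_neg (R : realType) (m : nat) : (Negz m)%:~R = - (m.+1)%:R :> R.
Proof. by rewrite NegzE intrN. Qed.

Lemma st_add (R : realType) (a b P1 Q1 P2 Q2 x1 y1 x2 y2 : R) s :
  st a b (P1 + P2) (Q1 + Q2) s (x1 + x2, y1 + y2) =
  ((st a b P1 Q1 s (x1, y1)).1 + (st a b P2 Q2 s (x2, y2)).1,
   (st a b P1 Q1 s (x1, y1)).2 + (st a b P2 Q2 s (x2, y2)).2).
Proof.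
elim: s x1 y1 x2 y2 => [|h s IH] x1 y1 x2 y2 //=; case: h.
  by rewrite -IH; congr (st _ _ _ _ _ (_, _)); ring.
by rewrite -IH; congr (st _ _ _ _ _ (_, _)); ring.
Qed.

Lemma st_scale (R : realType) (a b c P Q x y : R) s :
  st a b (c * P) (c * Q) s (c * x, c * y) =
  (c * (st a b P Q s (x, y)).1, c * (st a b P Q s (x, y)).2).
Proof.
elim: s x y => [|h s IH] x y //=; case: h.
  by rewrite -IH; congr (st _ _ _ _ _ (_, _)); ring.
by rewrite -IH; congr (st _ _ _ _ _ (_, _)); ring.
Qed.

Lemma st_PQ (R : realType) (a b P Q : R) s :
  st a b P Q s (0, 0) =
  (P * (st a b 1 0 s (0, 0)).1 + Q * (st a b 0 1 s (0, 0)).1,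
   P * (st a b 1 0 s (0, 0)).2 + Q * (st a b 0 1 s (0, 0)).2).
Proof.
have h1 := st_scale a b P 1 0 0 0 s; have h2 := st_scale a b Q 0 1 0 0 s.
have h3 := st_add a b (P * 1) (P * 0) (Q * 0) (Q * 1) (P * 0) (P * 0) (Q * 0) (Q * 0) s.
rewrite h1 h2 !mulr1 !mulr0 !addr0 !add0r in h3.
by rewrite h3.
Qed.

Lemma st_int0 (R : realType) (a b P Q : int) s :
  st (a%:~R : R) b%:~R P%:~R Q%:~R s (0, 0) =
  ((sti a b P Q s (0, 0)).1%:~R, (sti a b P Q s (0, 0)).2%:~R).
Proof. by rewrite -st_int. Qed.

Fixpoint alt (h : bool) (L : nat) : seq bool := if L is L'.+1 then h :: alt (~~ h) L' else [::].
Definition words k := [::] :: flatten [seq [:: alt true L; alt false L] | L <- iota 1 k.-1] ++ [:: alt true k].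

Lemma nz_split (R : realType) (r : R) : r != 0 -> r < 0 \/ 0 < r.
Proof. by rewrite neq_lt => /orP. Qed.

Definition canon (c : int * int) : bool * (int * int) :=
  if (0 < c.1) || ((c.1 == 0) && (0 < c.2)) then (true, c) else (false, (- c.1, - c.2)).

Lemma negform (R : realType) (c d : int) (x y : R) :
  c%:~R * x + d%:~R * y = - ((- c)%:~R * x + (- d)%:~R * y).
Proof. by rewrite !intrN !mulNr -opprD opprK. Qed.

Lemma canonE (R : realType) (c : int * int) (x y : R) :
  c.1%:~R * x + c.2%:~R * y = sg (canon c).1 ((canon c).2.1%:~R * x + (canon c).2.2%:~R * y).
Proof. rewrite /canon; case: ifP => _; [by [] | exact: negform]. Qed.

Definition coefs (a b : int) ds := map (fun d => (canon (fxi a b d), canon (fyi a b d))) ds.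

Definition frm (R : realType) (x y : R) (c : int * int) := c.1%:~R * x + c.2%:~R * y.

Lemma count_coef (R : realType) (a b : int) (x y : R) e f ds :
  count (fun d => (0 < sg e (fx a%:~R b%:~R x y d)) && (0 < sg f (fy a%:~R b%:~R x y d))) ds =
  count (fun c : (bool * (int * int)) * (bool * (int * int)) =>
     (0 < sg e (sg c.1.1 (frm x y c.1.2))) && (0 < sg f (sg c.2.1 (frm x y c.2.2)))) (coefs a b ds).
Proof. rewrite count_map; apply: eq_count => d. by rewrite [in LHS]fx_int [in LHS]fy_int (canonE (fxi a b d)) (canonE (fyi a b d)). Qed.

Lemma all_coef (R : realType) (a b : int) (x y : R) ds :
  (forall d, fx a%:~R b%:~R x y d != 0 /\ fy a%:~R b%:~R x y d != 0) ->
  all (fun c : (bool * (int * int)) * (bool * (int * int)) =>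
     (frm x y c.1.2 != 0) && (frm x y c.2.2 != 0)) (coefs a b ds).
Proof.
move=> H; rewrite all_map; apply/allP => d _; have [h1 h2] := H d; cbv beta iota.
move: h1 h2; rewrite fx_int fy_int (canonE (fxi a b d)) (canonE (fyi a b d)).
rewrite /frm; case: (canon (fxi a b d)).1; case: (canon (fyi a b d)).1; rewrite /sg ?oppr_eq0 => h1' h2'; exact/andP.
Qed.

Ltac splitnz := repeat match goal with H : is_true (_ && _) |- _ => case/andP: H => ? ? end;
  repeat match goal with H : is_true (_ != 0) |- _ => revert H end;
  repeat (let H := fresh "r" in move=> H;
     lazymatch type of H with
     | is_true (?r != 0) =>
        first [ match goal with H' : is_true (0 < r) |- _ => clear H end
              | match goal with H' : is_true (r < 0) |- _ => clear H end
              | case/nz_split: H => H; try (exfalso; lra) ]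
     end).

Lemma sgN (R : realType) e (r : R) : sg e (- r) = sg (~~ e) r.
Proof. by case: e; rewrite /sg ?opprK. Qed.
Lemma sg_pos (R : realType) e (r : R) : 0 < r -> (0 < sg e r) = e.
Proof. by move=> h; case: e; rewrite /sg ?oppr_gt0 ?h // lt_gtF. Qed.
Lemma sg_neg (R : realType) e (r : R) : r < 0 -> (0 < sg e r) = ~~ e.
Proof. by move=> h; case: e; rewrite /sg ?oppr_gt0 ?h // lt_gtF. Qed.

Ltac decide_ind := rewrite ?sgN; repeat match goal with
 | H : is_true (0 < ?r) |- context [ (0 < sg _ ?r)%R ] => rewrite !(sg_pos _ H)
 | H : is_true (?r < 0) |- context [ (0 < sg _ ?r)%R ] => rewrite !(sg_neg _ H)
 end.

Ltac case_tac := let H := fresh "H" in let e := fresh "e" in let f := fresh "f" in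
  let HA := fresh "HA" in intros H e f;
  match goal with |- context [count _ (words ?k)] =>
   match goal with |- context [@fx _ (@intmul _ _ ?a) (@intmul _ _ ?b)] =>
    have HA := all_coef (words k) H; rewrite count_coef;
    let L := eval vm_compute in (coefs a b (words k)) in
    let EL := fresh "EL" in
    assert (EL : coefs a b (words k) = L) by (vm_compute; reflexivity);
    rewrite EL in HA *; clear EL end end;
  clear H; move: HA; rewrite /= /frm ?intr_pos ?intr_neg => HA;
  splitnz; rewrite /=; decide_ind; case: e; case: f; done.


Definition case_ok (R : realType) (za zb : int) (k : nat) (cnt : bool -> bool -> nat) :=
  [/\ (0 < k)%N,
   (sti za zb 1 0 (pw k) (0, 0) == (0, 0)) && (sti za zb 0 1 (pw k) (0, 0) == (0, 0)),
   all (fun j => ~~ ((2 * (sti za zb 2 za (pw j) (0, 0)).1 + (sti za zb 2 za (pw j) (0, 0)).2 * zb == 0)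
                  && ((sti za zb 2 za (pw j) (0, 0)).1 * za + 2 * (sti za zb 2 za (pw j) (0, 0)).2 == 0)))
       (iota 1 k.-1) &
   (forall x y : R, (forall d, fx za%:~R zb%:~R x y d != 0 /\ fy za%:~R zb%:~R x y d != 0) ->
     forall e f, count (fun d => (0 < sg e (fx za%:~R zb%:~R x y d)) && (0 < sg f (fy za%:~R zb%:~R x y d))) (words k)
       = cnt e f)].

Ltac ord_tac := split; [ by [] | by vm_compute | by vm_compute | let x := fresh "x" in let y := fresh "y" in move=> x y; case_tac ].

Definition cpos (k : nat) (e f : bool) : nat := if e == f then k.-1 else 1%N.
Definition cneg (k : nat) (e f : bool) : nat := if e == f then 1%N else k.-1.

Lemma ok00 (R : realType) : case_ok R 0 0 2 (cpos 2). Proof. ord_tac. Qed.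
Lemma ok11 (R : realType) : case_ok R 1 1 3 (cpos 3). Proof. ord_tac. Qed.
Lemma ok12 (R : realType) : case_ok R 1 2 4 (cpos 4). Proof. ord_tac. Qed.
Lemma ok21 (R : realType) : case_ok R 2 1 4 (cpos 4). Proof. ord_tac. Qed.
Lemma ok13 (R : realType) : case_ok R 1 3 6 (cpos 6). Proof. ord_tac. Qed.
Lemma ok31 (R : realType) : case_ok R 3 1 6 (cpos 6). Proof. ord_tac. Qed.
Lemma okm11 (R : realType) : case_ok R (-1) (-1) 3 (cneg 3). Proof. ord_tac. Qed.
Lemma okm12 (R : realType) : case_ok R (-1) (-2) 4 (cneg 4). Proof. ord_tac. Qed.
Lemma okm21 (R : realType) : case_ok R (-2) (-1) 4 (cneg 4). Proof. ord_tac. Qed.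
Lemma okm13 (R : realType) : case_ok R (-1) (-3) 6 (cneg 6). Proof. ord_tac. Qed.
Lemma okm31 (R : realType) : case_ok R (-3) (-1) 6 (cneg 6). Proof. ord_tac. Qed.

Lemma case_order (R : realType) (n : nat) (b g : 'rV[R]_n) za zb k cnt :
  case_ok R za zb k cnt -> cf g b = za%:~R -> cf b g = zb%:~R -> b != 0 -> g != 0 ->
  is_order (refl_mx b *m refl_mx g) k.
Proof.
case=> k0 H1 H2 _ ea eb b0 g0; apply: is_order_gen => //.
  move=> P Q; rewrite st_PQ ea eb (_ : (1 : R) = (1 : int)%:~R) // (_ : (0 : R) = (0 : int)%:~R) //.
  rewrite !st_int0; case/andP: H1 => /eqP -> /eqP -> /=.
  by rewrite !mulr0 addr0.
move=> j Hj; have Hm : j \in iota 1 k.-1.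
  by rewrite mem_iota; case/andP: Hj => j0 jk; apply/andP; split => //; rewrite add1n prednK.
have := allP H2 j Hm.
rewrite ea eb (_ : (2 : R) = (2 : int)%:~R) // (_ : (0 : R) = (0 : int)%:~R) // st_int0 /=.
set X := (sti za zb 2 za (pw j) (0, 0)).1; set Y := (sti za zb 2 za (pw j) (0, 0)).2.
move=> /negP H [E1 E2]; apply: H; apply/andP; split.
  rewrite -(intr_eq0 R) rmorphD !rmorphM /=.
  have -> : (2 : int)%:~R * X%:~R + Y%:~R * zb%:~R = 2 * (X%:~R + Y%:~R * zb%:~R / 2) :> R by field.
  by rewrite E1 mulr0.
rewrite -(intr_eq0 R) rmorphD !rmorphM /=.
have -> : X%:~R * za%:~R + (2 : int)%:~R * Y%:~R = 2 * (X%:~R * za%:~R / 2 + Y%:~R) :> R by field.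
by rewrite E2 mulr0.
Qed.

Lemma words_size k : (0 < k)%N -> size (words k) = (2 * k)%N.
Proof.
move=> k0; rewrite /words /= size_cat /=.
have H : forall s : seq nat, size (flatten [seq [:: alt true L; alt false L] | L <- s]) = (2 * size s)%N.
  by elim=> [|L s IH] //=; rewrite IH mulnS.
rewrite H size_iota; lia.
Qed.

Lemma perm_word (R : realType) (n : nat) (Phi : seq 'rV[R]_n) (b g : 'rV[R]_n) (SW : seq 'M[R]_n) d :
  root_system Phi -> b \in Phi -> g \in Phi -> uniq SW -> (forall x, x \in SW <-> in_W Phi x) ->
  uniq (map (fun w => mxw b g d *m w) SW) /\ map (fun w => mxw b g d *m w) SW =i SW.
Proof.
move=> rs bP gP uSW HSW; have b0 := rs_nz rs bP; have g0 := rs_nz rs gP.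
split.
  have inj : injective (fun w : 'M[R]_n => mxw b g d *m w).
    move=> w1 w2 /= E.
    by rewrite -(mul1mx w1) -(mul1mx w2) -(mxw_invl d b0 g0) -!mulmxA E.
  by rewrite map_inj_uniq.
move=> x; apply/idP/idP.
  case/mapP => w /HSW wW ->; apply/HSW; apply: in_W_mul => //; exact: mxw_W.
move=> /HSW xW; apply/mapP; exists (mxw b g (rev d) *m x).
  by apply/HSW; apply: in_W_mul => //; exact: mxw_W.
by rewrite mulmxA mxw_invr // mul1mx.
Qed.

Lemma W_double (R : realType) (n : nat) (Phi : seq 'rV[R]_n) t (b g : 'rV[R]_n) (SW : seq 'M[R]_n)
  (ds : seq (seq bool)) e f c :
  root_system Phi -> b \in Phi -> g \in Phi -> uniq SW -> (forall x, x \in SW <-> in_W Phi x) ->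
  (forall w, in_W Phi w -> count (fun d => asb (Wsign Phi t e f b g (mxw b g d *m w))) ds = c) ->
  (size ds * count (fun w => asb (Wsign Phi t e f b g w)) SW = size SW * c)%N.
Proof.
move=> rs bP gP uSW HSW Hc.
apply: (@double_count _ _ SW ds (fun d w => mxw b g d *m w) _ c uSW).
  by move=> d _; exact: (perm_word d rs bP gP uSW HSW).
by move=> w /HSW; apply: Hc.
Qed.

Lemma per_w (R : realType) (n : nat) (Phi : seq 'rV[R]_n) t (b g : 'rV[R]_n) za zb k cnt w e f :
  root_system Phi -> regular Phi t -> b \in Phi -> g \in Phi ->
  case_ok R za zb k cnt -> cf g b = za%:~R -> cf b g = zb%:~R -> in_W Phi w ->
  count (fun d => asb (Wsign Phi t e f b g (mxw b g d *m w))) (words k) = cnt e f.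
Proof.
move=> rs reg bP gP [_ _ _ Hc] ea eb wW.
rewrite -(Hc (dot t (b *m w)) (dot t (g *m w))); last first.
  by move=> d; have := word_nz d rs reg bP gP wW; rewrite ea eb.
apply: eq_count => d; have := Wsign_word t d e f rs bP gP wW; rewrite ea eb => E.
by apply/asbP/idP => /E.
Qed.

Lemma dot_pos (R : realType) (n : nat) (b : 'rV[R]_n) : b != 0 -> 0 < dot b b.
Proof. by move=> b0; rewrite lt_def dot_nz // dot_ge0. Qed.

Lemma cs_strict (R : realType) (n : nat) (Phi : seq 'rV[R]_n) (b g : 'rV[R]_n) :
  root_system Phi -> b \in Phi -> g \in Phi -> g <> b -> g <> - b ->
  dot b g ^+ 2 < dot b b * dot g g.
Proof.
move=> rs bP gP gb gnb; have b0 := rs_nz rs bP; have g0 := rs_nz rs gP.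
have Bp := dot_pos b0; have Gp := dot_pos g0.
rewrite ltNge; apply/negP => Hle.
set B := dot b b; set G := dot g g; set D := dot b g.
pose u := B *: g + (- D) *: b.
have Eu : dot u u = B * (B * G - D ^+ 2).
  rewrite /u !dotDl !dotDr !dotZl !dotZr (dot_sym g b) -/B -/G -/D; ring.
have u0 : u = 0.
  apply: dot_eq0; apply/eqP; rewrite eq_le dot_ge0 andbT Eu.
  by rewrite pmulr_rle0 // subr_le0.
have gE : g = (D / B) *: b.
  apply: (@scalerI _ _ B); first by rewrite lt0r_neq0.
  rewrite scalerA mulrCA divff ?mulr1 ?lt0r_neq0 //.
  by apply/eqP; rewrite -subr_eq0 -scaleNr; apply/eqP; rewrite -u0 /u addrC.
case: rs => _ _ _ _ Hred.
have := Hred b (D / B) bP; rewrite -gE => /(_ gP) [] c1.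
  by apply: gb; rewrite gE c1 scale1r.
by apply: gnb; rewrite gE c1 scaleN1r.
Qed.

Lemma int_facts (R : realType) (n : nat) (Phi : seq 'rV[R]_n) (b g : 'rV[R]_n) :
  root_system Phi -> b \in Phi -> g \in Phi -> g <> b -> g <> - b ->
  exists za zb : int, [/\ cf g b = za%:~R, cf b g = zb%:~R, (za * zb < 4)%R,
    ((0 < za) = (0 < dot b g) /\ (0 < zb) = (0 < dot b g)) &
    ((za < 0) = (dot b g < 0) /\ (zb < 0) = (dot b g < 0)) /\
    ((za == 0) = (dot b g == 0) /\ (zb == 0) = (dot b g == 0))].
Proof.
move=> rs bP gP gb gnb; have b0 := rs_nz rs bP; have g0 := rs_nz rs gP.
have Bp := dot_pos b0; have Gp := dot_pos g0.
have cs := cs_strict rs bP gP gb gnb.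
case: (rs) => _ _ _ Hint _.
have [za hza] := Hint g b gP bP; have [zb hzb] := Hint b g bP gP.
rewrite (dot_sym g b) in hzb.
set B := dot b b in Bp cs hzb; set G := dot g g in Gp cs hza; set D := dot b g in cs hza hzb *.
have kG : 0 < 2 / G by rewrite divr_gt0.
have kB : 0 < 2 / B by rewrite divr_gt0.
have eG : 2 * D / G = D * (2 / G) by rewrite mulrA (mulrC D).
have eB : 2 * D / B = D * (2 / B) by rewrite mulrA (mulrC D).
exists za, zb; split.
- by [].
- by rewrite /cf (dot_sym g b).
- rewrite -(ltr_int R) rmorphM /= -hza -hzb.
  have -> : 2 * D / G * (2 * D / B) = 4 * (D ^+ 2 / (B * G)).
    field; apply/andP; split; apply: lt0r_neq0 => //.
  have h : D ^+ 2 / (B * G) < 1 by rewrite ltr_pdivrMr ?mulr_gt0 // mul1r.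
  by rewrite (_ : (4 : int)%:~R = 4 :> R) //; lra.
- split.
  + by rewrite -(ltr0z R za) -hza eG pmulr_lgt0.
  + by rewrite -(ltr0z R zb) -hzb eB pmulr_lgt0.
- split; split.
  + by rewrite -(ltrz0 R za) -hza eG pmulr_llt0.
  + by rewrite -(ltrz0 R zb) -hzb eB pmulr_llt0.
  + by rewrite -(intr_eq0 R za) -hza eG mulf_eq0 (negbTE (lt0r_neq0 kG)) orbF.
  + by rewrite -(intr_eq0 R zb) -hzb eB mulf_eq0 (negbTE (lt0r_neq0 kB)) orbF.
Qed.

Lemma classify (R : realType) (n : nat) (Phi : seq 'rV[R]_n) (b g : 'rV[R]_n) :
  root_system Phi -> b \in Phi -> g \in Phi -> g <> b -> g <> - b ->
  exists za zb k cnt, [/\ cf g b = za%:~R, cf b g = zb%:~R, case_ok R za zb k cnt &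
    [\/ [/\ 0 < dot b g, (2 < k)%N & cnt = cpos k],
        [/\ dot b g < 0, (2 < k)%N & cnt = cneg k] |
        [/\ dot b g = 0, k = 2%N & cnt = cpos 2]]].
Proof.
move=> rs bP gP gb gnb.
have [za [zb [ea eb prod [s1 s2] [[n1 n2] [z1 z2]]]]] := int_facts rs bP gP gb gnb.
have [hD|hD|hD] := ltgtP 0 (dot b g).
- move: s1 s2; rewrite hD => s1 s2.
  have : ((za = 1 /\ zb = 1) \/ (za = 1 /\ zb = 2) \/ (za = 2 /\ zb = 1) \/ (za = 1 /\ zb = 3) \/ (za = 3 /\ zb = 1))%R.
    by nia.
  case=> [[E1 E2]|[[E1 E2]|[[E1 E2]|[[E1 E2]|[E1 E2]]]]]; subst za zb.
  + by exists 1%R, 1%R, 3%N, (cpos 3); split => //; [exact: ok11 | constructor 1].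
  + by exists 1%R, 2%R, 4%N, (cpos 4); split => //; [exact: ok12 | constructor 1].
  + by exists 2%R, 1%R, 4%N, (cpos 4); split => //; [exact: ok21 | constructor 1].
  + by exists 1%R, 3%R, 6%N, (cpos 6); split => //; [exact: ok13 | constructor 1].
  + by exists 3%R, 1%R, 6%N, (cpos 6); split => //; [exact: ok31 | constructor 1].
- move: n1 n2; rewrite hD => n1 n2.
  have : ((za = -1 /\ zb = -1) \/ (za = -1 /\ zb = -2) \/ (za = -2 /\ zb = -1) \/ (za = -1 /\ zb = -3) \/ (za = -3 /\ zb = -1))%R.
    by nia.
  case=> [[E1 E2]|[[E1 E2]|[[E1 E2]|[[E1 E2]|[E1 E2]]]]]; subst za zb.
  + by exists (-1)%R, (-1)%R, 3%N, (cneg 3); split => //; [exact: okm11 | constructor 2].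
  + by exists (-1)%R, (-2)%R, 4%N, (cneg 4); split => //; [exact: okm12 | constructor 2].
  + by exists (-2)%R, (-1)%R, 4%N, (cneg 4); split => //; [exact: okm21 | constructor 2].
  + by exists (-1)%R, (-3)%R, 6%N, (cneg 6); split => //; [exact: okm13 | constructor 2].
  + by exists (-3)%R, (-1)%R, 6%N, (cneg 6); split => //; [exact: okm31 | constructor 2].
- move: z1 z2; rewrite hD eqxx => /eqP E1 /eqP E2; subst za zb.
  by exists 0%R, 0%R, 2%N, (cpos 2); split => //; [exact: ok00 | constructor 3].
Qed.

Lemma asb_iff (P : Prop) (c : bool) : (P <-> c) -> asb P = c.
Proof. by move=> E; apply/asbP/idP => /E. Qed.

Lemma per_w_eq (R : realType) (n : nat) (Phi : seq 'rV[R]_n) t (b : 'rV[R]_n) w e f :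
  root_system Phi -> regular Phi t -> b \in Phi -> in_W Phi w ->
  count (fun d => asb (Wsign Phi t e f b b (mxw b b d *m w))) [:: [::]; [:: true]] =
  (if e == f then 1 else 0)%N.
Proof.
move=> rs reg bP wW; have b0 := rs_nz rs bP.
rewrite /= (asb_iff (Wsign_word t [::] e f rs bP bP wW)).
rewrite (asb_iff (Wsign_word t [:: true] e f rs bP bP wW)).
have xnz : dot t (b *m w) != 0 by apply: reg; apply: in_W_root.
move: xnz; rewrite /fx /fy cfaa //=; set x := dot t (b *m w) => /nz_split [xp|xp];
  case: e; case: f; rewrite /sg /=;
  repeat match goal with |- context [(0 < ?r)%R] =>
    first [ rewrite (_ : (0 < r) = true); last by lra
          | rewrite (_ : (0 < r) = false); last by apply/negbTE; rewrite -leNgt; lra ] end;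
  done.
Qed.

Lemma cancel_mul (L p q : nat) : (0 < L)%N -> (L * p = L * q)%N -> p = q.
Proof. by move=> L0 /eqP; rewrite eqn_pmul2l // => /eqP. Qed.

Unset Implicit Arguments.

Theorem proposition3p5 (R : realType) (n : nat) (Phi : seq 'rV[R]_n)
  (t beta gamma : 'rV[R]_n) :
  root_system Phi -> regular Phi t ->
  posroot Phi t beta -> posroot Phi t gamma ->
  exists pp mm pm mp : nat,
    [/\ [/\ has_card (Wsign Phi t true true beta gamma) pp,
            has_card (Wsign Phi t false false beta gamma) mm,
            has_card (Wsign Phi t true false beta gamma) pm
          & has_card (Wsign Phi t false true beta gamma) mp],
        pp = mm /\ pm = mp,
        (exists k : nat, is_order (refl_mx beta *m refl_mx gamma) k /\
           (beta <> gamma ->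
              (0 <= dot beta gamma -> pp = ((k - 1) * pm)%N) /\
              (dot beta gamma <= 0 -> pm = ((k - 1) * pp)%N)))
      & ([/\ pp = mm, mm = pm & pm = mp] <-> dot beta gamma = 0)].
Proof.
move=> rs reg /andP [bP bpos] /andP [gP gpos].
have b0 := rs_nz rs bP; have g0 := rs_nz rs gP.
have [SW [uSW HSW]] := W_enum rs.
have Wn0 : (0 < size SW)%N.
  have h1 : 1%:M \in SW by apply/HSW; exact: inW1.
  by rewrite lt0n size_eq0; apply/eqP => E; move: h1; rewrite E in_nil.
pose cnt_of e f := count (fun w => asb (Wsign Phi t e f beta gamma w)) SW.
have hc : forall e f, has_card (Wsign Phi t e f beta gamma) (cnt_of e f).
  move=> e f; exists (filter (fun w => asb (Wsign Phi t e f beta gamma w)) SW); split.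
  - exact: filter_uniq.
  - move=> x; rewrite mem_filter; split.
      by case/andP => /asbP.
    by move=> H; apply/andP; split; [apply/asbP | apply/HSW; case: H].
  - by rewrite size_filter.
exists (cnt_of true true), (cnt_of false false), (cnt_of true false), (cnt_of false true).
case: (eqVneq beta gamma) => [E|bg].
  subst gamma.
  have Hd : forall e f, (2 * cnt_of e f = size SW * (if e == f then 1 else 0))%N.
    move=> e f; apply: (@W_double _ _ Phi t beta beta SW [:: [::]; [:: true]] e f) => //.
    by move=> w wW; apply: per_w_eq.
  have Htt := Hd true true; have Hff := Hd false false.
  have Htf := Hd true false; have Hft := Hd false true.
  rewrite /= muln1 muln0 in Htt Hff Htf Hft.
  have pm0 : cnt_of true false = 0%N by lia.
  have mp0 : cnt_of false true = 0%N by lia.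
  split => //.
  - split; first by apply: (@cancel_mul 2) => //; rewrite Htt Hff.
    by rewrite pm0 mp0.
  - exists 1%N; split => //; split => //=; first by rewrite mulmx1 refl_invol.
    by move=> j; lia.
  - split; first by case=> _ h _; lia.
    by move=> /eqP; rewrite (negbTE (dot_nz b0)).
have gb : gamma <> beta by move=> E; move: bg; rewrite E eqxx.
have gnb : gamma <> - beta.
  by move=> E; move: gpos; rewrite E dotNr oppr_gt0 ltNge (ltW bpos).
have [za [zb [k [cnt [ea eb ok Hs]]]]] := classify rs bP gP gb gnb.
have ord := case_order ok ea eb b0 g0.
have k0 : (0 < k)%N by case: ok.
have Hd : forall e f, (2 * k * cnt_of e f = size SW * cnt e f)%N.
  move=> e f; rewrite -(words_size k0).
  apply: (@W_double _ _ Phi t beta gamma SW (words k) e f) => //.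
  by move=> w wW; exact: (per_w e f rs reg bP gP ok ea eb wW).
have Htt := Hd true true; have Hff := Hd false false.
have Htf := Hd true false; have Hft := Hd false true.
have L0 : (0 < 2 * k)%N by lia.
case: Hs => [[hD k2 E]|[hD k2 E]|[hD k2 E]]; subst cnt; rewrite /cpos /cneg /= in Htt Hff Htf Hft.
- have e1 : cnt_of true true = cnt_of false false by apply: (cancel_mul L0); rewrite Htt Hff.
  have e2 : cnt_of true false = cnt_of false true by apply: (cancel_mul L0); rewrite Htf Hft.
  have e3 : cnt_of true true = (k.-1 * cnt_of true false)%N.
    by apply: (cancel_mul L0); rewrite Htt mulnCA Htf muln1 mulnC.
  split => //.
  + exists k; split => // _; split; first by move=> _; rewrite subn1.
    by move=> h; move: hD; rewrite ltNge h.
  + split; last by move=> h; move: hD; rewrite h ltxx.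
    case=> h1 h2 _; have : (size SW * k.-1 = size SW * 1)%N by rewrite -Htt -Htf -h2 h1.
    move/eqP; rewrite eqn_pmul2l //; lia.
- have e1 : cnt_of true true = cnt_of false false by apply: (cancel_mul L0); rewrite Htt Hff.
  have e2 : cnt_of true false = cnt_of false true by apply: (cancel_mul L0); rewrite Htf Hft.
  have e3 : cnt_of true false = (k.-1 * cnt_of true true)%N.
    by apply: (cancel_mul L0); rewrite Htf mulnCA Htt muln1 mulnC.
  split => //.
  + exists k; split => // _; split; last by move=> _; rewrite subn1.
    by move=> h; move: hD; rewrite ltNge h.
  + split; last by move=> h; move: hD; rewrite h ltxx.
    case=> h1 h2 _; have : (size SW * k.-1 = size SW * 1)%N by rewrite -Htf -Htt h1 h2.
    move/eqP; rewrite eqn_pmul2l //; lia.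
- subst k.
  have e1 : cnt_of true true = cnt_of false false by apply: (cancel_mul L0); rewrite Htt Hff.
  have e2 : cnt_of true false = cnt_of false true by apply: (cancel_mul L0); rewrite Htf Hft.
  have e3 : cnt_of true true = cnt_of true false by apply: (cancel_mul L0); rewrite Htt Htf.
  split => //.
  + exists 2%N; split => // _; split => _; rewrite mul1n //.
  + by split => // _; split; rewrite -?e1 -?e2 ?e3.
Qed.
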